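(* Let $(X,\le,\to,\rightsquigarrow,0,1)$ be a bounded sup-commutative pseudo BCK-algebra and let $(\exists,\forall)$ be a pair of strong synchronized maps on $X$ such that $\exists$ is a weak existential quantifier (equivalently, $\forall$ is a weak universal quantifier). Then $\forall(x\wedge y)=\forall x\wedge\forall y$ and $\exists(x\vee y)=\exists x\vee\exists y$ for all $x,y\in X$.
   Context: A quantum B-algebra is a partially ordered set $(X,\le)$ with two binary operations $\to$ and $\rightsquigarrow$ such that for all $x,y,z\in X$: $y\to z\le (x\to y)\to(x\to z)$; $y\rightsquigarrow z\le (x\rightsquigarrow y)\to(x\rightsquigarrow z)$; $y\le z$ implies $x\to y\le x\to z$; and $x\le y\to z$ iff $y\le x\rightsquigarrow z$. A bounded pseudo BCK-algebra $(X,\le,\to,\rightsquigarrow,0,1)$ is a quantum B-algebra with a greatest element $1$ satisfying $1\to x=1\rightsquigarrow x=x$ and a least element $0$; then $x\le y$ iff $x\to y=1$ iff $x\rightsquigarrow y=1$. It is sup-commutative if $(x\to y)\rightsquigarrow y=(y\to x)\rightsquigarrow x$ and $(x\rightsquigarrow y)\to y=(y\rightsquigarrow x)\to x$ for all $x,y$. Write $x^{-}=x\to 0$, $x^{\sim}=x\rightsquigarrow 0$; a bounded sup-commutative pseudo BCK-algebra satisfies $(x^{-})^{\sim}=(x^{\sim})^{-}=x$, and $(X,\le)$ is a lattice with $x\vee y=(x\to y)\rightsquigarrow y=(x\rightsquigarrow y)\to y$ and $x\wedge y=(x^{-}\vee y^{-})^{\sim}=(x^{\sim}\vee y^{\sim})^{-}$.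 Define $x\odot y=(x\to y^{-})^{\sim}$ and $x\oplus y=y^{\sim}\to x$ $(=x^{-}\rightsquigarrow y)$. A map $\tau:X\to X$ is good if $(\tau(x^{-}))^{\sim}=(\tau(x^{\sim}))^{-}$ for all $x$; good maps $\tau,\sigma$ are synchronized if $\sigma(x)=(\tau(x^{-}))^{\sim}=(\tau(x^{\sim}))^{-}$ for all $x$; strong synchronized if moreover $\tau\circ\sigma=\sigma$ (equivalently $\sigma\circ\tau=\tau$). A good map $\exists$ is a weak existential quantifier if for all $x,y$: $\exists 0=0$; $\exists 1=1$; $x\le\exists x$; $\exists(x\oplus\exists y)=\exists(\exists x\oplus y)=\exists x\oplus\exists y$; $\exists(x\oplus x)=\exists x\oplus\exists x$; $\exists(x\odot\exists y)=\exists(\exists x\odot y)=\exists x\odot\exists y$. A good map $\forall$ is a weak universal quantifier if for all $x,y$: $\forall 1=1$; $\forall 0=0$; $\forall x\le x$; $\forall(x\odot\forall y)=\forall(\forall x\odot y)=\forall x\odot\forall y$; $\forall(x\odot x)=\forall x\odot\forall x$; $\forall(x\oplus\forall y)=\forall(\forall x\oplus y)=\forall x\oplus\forall y$. *)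

(* Defs.v *)
Set Implicit Arguments.

Section PseudoBCK.
Variables (X : Type) (le : X -> X -> Prop) (imp simp : X -> X -> X) (zero one : X).

Definition is_poset : Prop :=
  (forall x, le x x) /\
  (forall x y, le x y -> le y x -> x = y) /\
  (forall x y z, le x y -> le y z -> le x z).

Definition is_quantum_B_algebra : Prop :=
  is_poset /\
  (forall x y z, le (imp y z) (imp (imp x y) (imp x z))) /\
  (forall x y z, le (simp y z) (imp (simp x y) (simp x z))) /\
  (forall x y z, le y z -> le (imp x y) (imp x z)) /\
  (forall x y z, le x (imp y z) <-> le y (simp x z)).

Definition is_bounded_pseudo_BCK : Prop :=
  is_quantum_B_algebra /\
  (forall x, le x one) /\
  (forall x, imp one x = x) /\
  (forall x, simp one x = x) /\
  (forall x, le zero x).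

Definition is_sup_commutative : Prop :=
  (forall x y, simp (imp x y) y = simp (imp y x) x) /\
  (forall x y, imp (simp x y) y = imp (simp y x) x).

Definition is_bsc_pseudo_BCK : Prop :=
  is_bounded_pseudo_BCK /\ is_sup_commutative.

Definition nminus (x : X) : X := imp x zero.
Definition ntilde (x : X) : X := simp x zero.
Definition bjoin (x y : X) : X := simp (imp x y) y.
Definition bmeet (x y : X) : X := ntilde (bjoin (nminus x) (nminus y)).
Definition bodot (x y : X) : X := ntilde (imp x (nminus y)).
Definition boplus (x y : X) : X := imp (ntilde y) x.

Definition good_map (t : X -> X) : Prop :=
  forall x, ntilde (t (nminus x)) = nminus (t (ntilde x)).

Definition synchronized (t s : X -> X) : Prop :=
  good_map t /\ good_map s /\
  (forall x, s x = ntilde (t (nminus x)) /\ s x = nminus (t (ntilde x))).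

Definition strong_synchronized (t s : X -> X) : Prop :=
  synchronized t s /\ (forall x, t (s x) = s x).

Definition weak_existential_quantifier (E : X -> X) : Prop :=
  good_map E /\
  E zero = zero /\ E one = one /\
  (forall x, le x (E x)) /\
  (forall x y, E (boplus x (E y)) = boplus (E x) (E y) /\
               E (boplus (E x) y) = boplus (E x) (E y)) /\
  (forall x, E (boplus x x) = boplus (E x) (E x)) /\
  (forall x y, E (bodot x (E y)) = bodot (E x) (E y) /\
               E (bodot (E x) y) = bodot (E x) (E y)).

Definition weak_universal_quantifier (A : X -> X) : Prop :=
  good_map A /\
  A one = one /\ A zero = zero /\
  (forall x, le (A x) x) /\
  (forall x y, A (bodot x (A y)) = bodot (A x) (A y) /\
               A (bodot (A x) y) = bodot (A x) (A y)) /\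
  (forall x, A (bodot x x) = bodot (A x) (A x)) /\
  (forall x y, A (boplus x (A y)) = boplus (A x) (A y) /\
               A (boplus (A x) y) = boplus (A x) (A y)).

End PseudoBCK.

(* Main.v *)
Require Import Defs.
From Stdlib Require Import FunctionalExtensionality.

Theorem lemma6p4 (X : Type) (le : X -> X -> Prop) (imp simp : X -> X -> X)
  (zero one : X) (E A : X -> X) :
  is_bsc_pseudo_BCK le imp simp zero one ->
  strong_synchronized imp simp zero E A ->
  weak_existential_quantifier le imp simp zero one E ->
  forall x y : X,
    A (bmeet imp simp zero x y) = bmeet imp simp zero (A x) (A y) /\
    E (bjoin imp simp x y) = bjoin imp simp (E x) (E y).
Proof.
  intros [[[[Hrefl [Hanti Htrans]] [a1 [a2 [a3 adj]]]] [top [imp1 [simp1 bot]]]] [sc1 sc2]]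
         [[_ [_ Hsync]] Hstrong]
         [_ [E0 [E1 [Einc [Eplus [_ Edot]]]]]].
  assert (Hsi : simp = imp).
  { extensionality u; extensionality v.
    apply Hanti.
    - specialize (a2 one u v). rewrite !simp1 in a2. exact a2.
    - assert (D : forall p q r, le (simp p (imp q r)) (simp q (simp p r))).
      { intros p q r.
        assert (h1 : le q (simp (imp q r) r)) by (apply adj; apply Hrefl).
        pose proof (a2 p (imp q r) r) as h2.
        pose proof (Htrans _ _ _ h1 h2) as h3.
        apply adj in h3. exact h3. }
      specialize (D one u v). rewrite !simp1 in D. exact D. }
  subst simp.
  unfold bmeet, bjoin, ntilde, nminus, boplus, bodot in *.
  assert (le1 : forall w, le one w -> w = one) by (intros; apply Hanti; auto).
  assert (F1 : forall u v, le u v -> imp u v = one).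
  { intros u v h. apply le1. apply adj. rewrite imp1. exact h. }
  assert (F1' : forall u v, imp u v = one -> le u v).
  { intros u v h. pose proof (proj1 (adj one u v)) as k. rewrite imp1 in k.
    apply k. rewrite h. apply Hrefl. }
  assert (antit : forall a b z, le a b -> le (imp b z) (imp a z)).
  { intros a b z h. pose proof (a1 a b z) as k. rewrite (F1 _ _ h), imp1 in k. exact k. }
  assert (NN : forall u, imp (imp u zero) zero = u).
  { intros u. rewrite sc1. rewrite (F1 _ _ (bot u)). apply imp1. }
  assert (upl : forall u v, le u (imp (imp u v) v)) by (intros; apply adj; apply Hrefl).
  assert (upr : forall u v, le v (imp (imp u v) v)).
  { intros u v. apply adj. rewrite (F1 v v (Hrefl v)). apply top. }
  assert (least : forall u v c, le u c -> le v c -> le (imp (imp u v) v) c).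
  { intros u v c hu hv.
    assert (k : le (imp (imp u v) v) (imp (imp c v) v)) by (apply antit; apply antit; exact hu).
    rewrite (sc1 c v), (F1 _ _ hv), imp1 in k. exact k. }
  assert (Adef : forall u, A u = imp (E (imp u zero)) zero) by (intros; apply (proj1 (Hsync u))).
  assert (EN : forall w, E (imp (E w) zero) = imp (E w) zero).
  { intros w. pose proof (Hstrong (imp w zero)) as k. rewrite !Adef in k. rewrite !NN in k. exact k. }
  assert (EE : forall w, E (E w) = E w).
  { intros w. pose proof (proj1 (Eplus zero w)) as k. unfold ntilde in k. rewrite E0, !NN in k. exact k. }
  assert (Eimp : forall a b, E (imp (E a) (E b)) = imp (E a) (E b)).
  { intros a b. pose proof (proj2 (Eplus b (imp (E a) zero))) as k. unfold ntilde in k.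
    rewrite EN, NN in k. exact k. }
  assert (Emono : forall u v, le u v -> le (E u) (E v)).
  { intros u v h.
    assert (h' : imp u (E v) = one) by (apply F1; eapply Htrans; [exact h| apply Einc]).
    pose proof (proj1 (Edot u (imp (E v) zero))) as k. unfold ntilde, nminus in k.
    rewrite EN, NN, h' in k.
    assert (z1 : imp one zero = zero) by apply imp1.
    rewrite z1, E0 in k.
    apply F1'. rewrite <- (NN (imp (E u) (E v))), <- k. rewrite (F1 zero zero (bot zero)). reflexivity. }
  assert (Join : forall x y, E (imp (imp x y) y) = imp (imp (E x) (E y)) (E y)).
  { intros x y. apply Hanti.
    - set (w := imp (imp (E x) (E y)) (E y)).
      assert (Ew : E w = w).
      { unfold w. rewrite <- (Eimp x y). apply Eimp. }
      rewrite <- Ew. apply Emono. apply least.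
      + eapply Htrans; [apply Einc| apply upl].
      + eapply Htrans; [apply Einc| apply upr].
    - apply least; apply Emono; [apply upl | apply upr]. }
  intros x y. split.
  - rewrite !Adef, !NN, Join. reflexivity.
  - apply Join.
Qed.
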